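(* The following implementation of the extended weak descriptor abstract data type is lock-free: in every execution in which processes take infinitely many steps, infinitely many of the descriptor operations CreateNew, ReadField, ReadImmutables, WriteField, CASField terminate. Implementation: for each descriptor type $T$ and process $p$ there is one shared object $D_{T,p}$ holding the immutable fields of type $T$ and a single word $mutables$ containing a sequence number $seq$ (initially $0$) and all mutable fields, read and CASed atomically as one word. A descriptor pointer is a pair $\langle q,s\rangle$. - $\mathrm{CreateNew}(T,v_1,\ldots)$ by $p$: $oldseq:=D_{T,p}.mutables.seq$; set the sequence number to $oldseq+1$; write every field with its value; set the sequence number to $oldseq+2$; return $\langle p, oldseq+2\rangle$. - $\mathrm{ReadField}(\langle q,s\rangle,f,dv)$: read field $f$ of $D_{T,q}$, then read $D_{T,q}.mutables.seq$; return $dv$ if it differs from $s$, else the value read. - $\mathrm{ReadImmutables}(\langle q,s\rangle)$: read all immutable fields of $D_{T,q}$, then the sequence number; return $\bot$ if it differs from $s$, else the values read. - $\mathrm{WriteField}(\langle q,s\rangle,f,v)$: repeat: $exp:=D_{T,q}.mutables$; if $exp.seq\ne s$ return; $new:=exp$ with $f$ set to $v$; if $\mathrm{CAS}(D_{T,q}.mutables,exp,new)$ succeeds return. - $\mathrm{CASField}(\langle q,s\rangle,f,fexp,fnew)$: repeat: $exp:=D_{T,q}.mutables$; if $exp.seq\ne s$ return $\bot$; if $exp.f\ne fexp$ return $exp.f$; $new:=exp$ with $f$ set to $fnew$; if $\mathrm{CAS}(D_{T,q}.mutables,exp,new)$ succeeds return.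
   Context: Asynchronous shared-memory system of processes; shared memory consists of base objects supporting read, write and compare-and-swap (CAS), each step being atomic. An execution is an alternating sequence of configurations and steps. A CAS$(x, exp, new)$ atomically changes $x$ to $new$ and succeeds if $x=exp$, and otherwise fails without changing $x$. Sequence numbers are unbounded. *)

(* Defs.v *)
From mathcomp Require Import all_boot.
Set Implicit Arguments. Unset Strict Implicit. Unset Printing Implicit Defensive.

Section WeakDescriptor.

(* DT : descriptor types; P : the (finitely many) processes; V : field values.
   nimm T / nmut T : number of immutable / mutable fields of type T. *)
Variables (DT : eqType) (P : finType) (V : eqType).
Variables (nimm nmut : DT -> nat).

(* the single word D_{T,p}.mutables : (sequence number, mutable fields) *)
Definition word := (nat * seq V)%type.

(* shared memory: immutable field i of D_{T,p}, and D_{T,p}.mutables *)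
Record mem := Mem { imm : DT -> P -> nat -> V ; muts : DT -> P -> word }.

Definition upd_imm (m : mem) (T : DT) (p : P) (i : nat) (v : V) : mem :=
  Mem (fun T' p' i' => if [&& T' == T, p' == p & i' == i] then v else imm m T' p' i')
      (muts m).

Definition upd_muts (m : mem) (T : DT) (p : P) (w : word) : mem :=
  Mem (imm m) (fun T' p' => if (T' == T) && (p' == p) then w else muts m T' p').

(* Operations (invocations).  A descriptor pointer <q,s> of type T is given
   by T, q, s.  A field for ReadField is [inl i] (immutable field i) or
   [inr j] (mutable field j). *)
Inductive op :=
| CreateNew of DT & seq V & seq V          (* T, immutable values, mutable values *)
| ReadField of DT & P & nat & (nat + nat) & V   (* T, q, s, f, dv *)
| ReadImmutables of DT & P & nat                (* T, q, s *)
| WriteField of DT & P & nat & nat & V          (* T, q, s, f, v *)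
| CASField of DT & P & nat & nat & V & V.       (* T, q, s, f, fexp, fnew *)

Definition valid_op (o : op) : Prop :=
  match o with
  | CreateNew T vi vm => size vi = nimm T /\ size vm = nmut T
  | ReadField T _ _ (inl i) _ => i < nimm T
  | ReadField T _ _ (inr j) _ => j < nmut T
  | ReadImmutables _ _ _ => True
  | WriteField T _ _ f _ => f < nmut T
  | CASField T _ _ f _ _ => f < nmut T
  end.

Inductive lstate :=
| Idle
| CN1 of DT & seq V & seq V                 (* read mutables (oldseq) *)
| CN2 of DT & seq V & seq V & word          (* set seq to oldseq+1 *)
| CN3 of DT & seq V & nat & nat & seq V     (* T, vm, oldseq, i, remaining imm values: write imm field i *)
| CN4 of DT & seq V & nat                   (* write mutable fields *)
| CN5 of DT & seq V & nat                   (* set seq to oldseq+2, return *)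
| RF1 of DT & P & nat & (nat + nat) & V     (* read field f *)
| RF2 of DT & P & nat & V & option V        (* read seq, return *)
| RI1 of DT & P & nat & nat & seq V         (* read immutable field i *)
| RI2 of DT & P & nat & seq V               (* read seq, return *)
| WF1 of DT & P & nat & nat & V             (* exp := mutables *)
| WF2 of DT & P & nat & nat & V & word      (* CAS *)
| CF1 of DT & P & nat & nat & V & V         (* exp := mutables *)
| CF2 of DT & P & nat & nat & V & V & word. (* CAS *)

Definition cn_imm T vm old i (rest : seq V) : lstate :=
  if rest is _ :: _ then CN3 T vm old i rest else CN4 T vm old.

Definition ri_next T q s i acc : lstate :=
  if i < nimm T then RI1 T q s i acc else RI2 T q s acc.

Definition start (o : op) : lstate :=
  match o with
  | CreateNew T vi vm => CN1 T vi vm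
  | ReadField T q s f dv => RF1 T q s f dv
  | ReadImmutables T q s => ri_next T q s 0 [::]
  | WriteField T q s f v => WF1 T q s f v
  | CASField T q s f fexp fnew => CF1 T q s f fexp fnew
  end.

(* one atomic shared-memory step (read, write or CAS, with the local
   computation around it) of a busy process p *)
Definition pstep (p : P) (m : mem) (l : lstate) : mem * lstate :=
  match l with
  | Idle => (m, Idle)
  | CN1 T vi vm => (m, CN2 T vi vm (muts m T p))
  | CN2 T vi vm w => (upd_muts m T p (w.1.+1, w.2), cn_imm T vm w.1 0 vi)
  | CN3 T vm old i rest =>
      match rest with
      | v :: rest' => (upd_imm m T p i v, cn_imm T vm old i.+1 rest')
      | [::] => (m, CN4 T vm old)
      end
  | CN4 T vm old => (upd_muts m T p (old.+1, vm), CN5 T vm old)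
  | CN5 T vm old => (upd_muts m T p (old.+2, vm), Idle)   (* returns <p, old+2> *)
  | RF1 T q s f dv =>
      let x := match f with
               | inl i => Some (imm m T q i)
               | inr j => onth (muts m T q).2 j
               end in
      (m, RF2 T q s dv x)
  | RF2 T q s dv x => (m, Idle)    (* returns dv if seq != s, else x *)
  | RI1 T q s i acc => (m, ri_next T q s i.+1 (rcons acc (imm m T q i)))
  | RI2 T q s acc => (m, Idle)     (* returns bot if seq != s, else acc *)
  | WF1 T q s f v =>
      let exp := muts m T q in
      if exp.1 != s then (m, Idle) else (m, WF2 T q s f v exp)
  | WF2 T q s f v exp =>
      if muts m T q == exp
      then (upd_muts m T q (exp.1, set_nth v exp.2 f v), Idle)
      else (m, WF1 T q s f v)
  | CF1 T q s f fexp fnew =>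
      let exp := muts m T q in
      if exp.1 != s then (m, Idle)                       (* returns bot *)
      else if onth exp.2 f != Some fexp then (m, Idle)   (* returns exp.f *)
      else (m, CF2 T q s f fexp fnew exp)
  | CF2 T q s f fexp fnew exp =>
      if muts m T q == exp
      then (upd_muts m T q (exp.1, set_nth fnew exp.2 f fnew), Idle)
      else (m, CF1 T q s f fexp fnew)
  end.

Record config := Config { cmem : mem ; loc : P -> lstate }.

Definition set_loc (c : config) (p : P) (l : lstate) (m : mem) : config :=
  Config m (fun p' => if p' == p then l else loc c p').

Definition step (c : config) (p : P) (c' : config) : Prop :=
  (loc c p = Idle /\ exists o, valid_op o /\ c' = set_loc c p (start o) (cmem c))
  \/ (loc c p <> Idle /\
      c' = set_loc c p (pstep p (cmem c) (loc c p)).2 (pstep p (cmem c) (loc c p)).1).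

Definition initial (c : config) : Prop :=
  (forall p, loc c p = Idle) /\
  (forall T p, (muts (cmem c) T p).1 = 0 /\ size (muts (cmem c) T p).2 = nmut T).

Definition execution (c : nat -> config) (sched : nat -> P) : Prop :=
  initial (c 0) /\ forall i, step (c i) (sched i) (c i.+1).

Definition completes (c : nat -> config) (sched : nat -> P) (i : nat) : Prop :=
  loc (c i) (sched i) <> Idle /\ loc (c i.+1) (sched i) = Idle.

End WeakDescriptor.

(* Main.v *)
Require Import Defs.
From mathcomp Require Import all_boot.
From Stdlib Require Import Classical.
From mathcomp Require Import zify.
Set Implicit Arguments. Unset Strict Implicit. Unset Printing Implicit Defensive.

Definition aw (DT : eqType) (P : finType) (V : eqType) (l : lstate DT P V) : nat :=
  match l with
  | Idle => 3
  | CN1 _ _ _ => 2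
  | CN2 _ _ _ _ => 2
  | CN3 _ _ _ _ _ => 1
  | CN4 _ _ _ => 1
  | _ => 0
  end.

Definition lm (DT : eqType) (P : finType) (V : eqType) (nimm : DT -> nat)
  (mu : DT -> P -> word V) (l : lstate DT P V) : nat :=
  match l with
  | Idle => 0
  | CN1 _ vi _ => (size vi).+4.+1
  | CN2 _ vi _ _ => (size vi).+4
  | CN3 _ _ _ _ rest => (size rest).+2
  | CN4 _ _ _ => 1
  | CN5 _ _ _ => 0
  | RF1 _ _ _ _ _ => 1
  | RF2 _ _ _ _ _ => 0
  | RI1 T _ _ i _ => (nimm T - i).+1
  | RI2 _ _ _ _ => 0
  | WF1 _ _ _ _ _ => 2
  | WF2 T q _ _ _ exp => if mu T q == exp then 1 else 3
  | CF1 _ _ _ _ _ _ => 2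
  | CF2 T q _ _ _ _ exp => if mu T q == exp then 1 else 3
  end.

Lemma local_step (DT : eqType) (P : finType) (V : eqType) (nimm : DT -> nat)
  (p : P) (m : Defs.mem DT P V) (l : lstate DT P V) :
  l <> Idle _ _ _ -> (pstep nimm p m l).2 <> Idle _ _ _ ->
  aw (pstep nimm p m l).2 < aw l \/
  (aw (pstep nimm p m l).2 = aw l /\ muts (pstep nimm p m l).1 = muts m /\
   lm nimm (muts m) (pstep nimm p m l).2 < lm nimm (muts m) l).
Proof.
case: l => //=.
all: try (by move=> *; left).
all: try (by move=> *; right; rewrite ?eqxx).
all: try (by move=> * []).
- by move=> T vi vm w _ _; left; case: vi.
- move=> T vm old i [|v rest] _ _ /=; right; first by [].
  by case: rest.
- move=> T q s i acc _; rewrite /ri_next; case: ifP => //= H _; right; split=> //; split=> //.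
  lia.
- move=> T q s f v _; case: ifP => //= _ _; right; by rewrite eqxx.
- move=> T q s f v exp _; case: ifP => //= H _; by right.
- move=> T q s f e n _; case: ifP => //= _; case: ifP => //= _ _; right; by rewrite eqxx.
- move=> T q s f e n exp _; case: ifP => //= H _; by right.
Qed.

Lemma sum_lt (P : finType) (F G : P -> nat) (p : P) :
  F p < G p -> (forall q, q != p -> F q = G q) -> \sum_(q : P) F q < \sum_(q : P) G q.
Proof.
move=> lt eq; rewrite (bigD1 p) //= [X in _ < X](bigD1 p) //=.
have -> : \sum_(q | true && (q != p)) F q = \sum_(q | true && (q != p)) G q.
  by apply: eq_bigr => q /= /eq.
by rewrite ltn_add2r.
Qed.

Lemma lex_wf (f g : nat -> nat) N :
  (forall i, N <= i -> f i.+1 < f i \/ (f i.+1 = f i /\ g i.+1 < g i)) -> False.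
Proof.
move=> H.
suff: forall a i, N <= i -> f i < a -> False by move/(_ (f N).+1 N (leqnn _) (ltnSn _)).
elim=> [//|a IH] i Ni.
rewrite ltnS leq_eqVlt => /orP [/eqP fa | ]; last exact: IH Ni.
suff: forall b j, N <= j -> f j = a -> g j < b -> False by move/(_ (g i).+1 i Ni fa (ltnSn _)).
elim=> [//|b IHb] j Nj fj gj.
case: (H j Nj) => [lt | [eq lt]].
- apply: (IH j.+1); [exact: leqW | by rewrite -fj].
- apply: (IHb j.+1 (leqW Nj)); [by rewrite eq | lia].
Qed.

Theorem mainTheorem2 (DT : eqType) (P : finType) (V : eqType)
    (nimm nmut : DT -> nat)
    (c : nat -> config DT P V) (sched : nat -> P) :
  execution nimm nmut c sched ->
  forall N : nat, exists i : nat, N <= i /\ completes c sched i.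
Proof.
move=> [_ stp] N; apply: NNPP => H.
have nc : forall i, N <= i -> ~ completes c sched i.
  by move=> i Ni Hc; apply: H; exists i.
apply: (@lex_wf (fun i => \sum_(q : P) aw (loc (c i) q))
                (fun i => \sum_(q : P) lm nimm (muts (cmem (c i))) (loc (c i) q)) N).
move=> i Ni; cbv beta.
have := stp i; set p := sched i.
case=> [[Hid [o [_ E]]] | [Hb E]].
- left; rewrite E; apply: (@sum_lt P (fun q => aw (loc (set_loc (c i) p (start nimm o) (cmem (c i))) q)) (fun q => aw (loc (c i) q)) p).
    rewrite /= eqxx Hid /=.
    clear E; case: o => //= T q s; rewrite /ri_next; by case: ifP.
  by move=> q /= /negbTE ->.
- have nI : (pstep nimm p (cmem (c i)) (loc (c i) p)).2 <> Idle _ _ _.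
    move=> h; apply: (nc i Ni); split=> //.
    by rewrite E /= eqxx h.
  set st := pstep nimm p (cmem (c i)) (loc (c i) p) in E nI *.
  case: (local_step Hb nI) => [lt | [eqa [em ltb]]].
  + left; rewrite E.
    apply: (@sum_lt P (fun q => aw (loc (set_loc (c i) p st.2 st.1) q)) (fun q => aw (loc (c i) q)) p); first by rewrite /= eqxx.
    by move=> q /= /negbTE ->.
  + right; rewrite E; split.
      apply: eq_bigr => q _ /=; case: eqP => // ->; exact: eqa.
    apply: (@sum_lt P (fun q => lm nimm (muts (cmem (set_loc (c i) p st.2 st.1))) (loc (set_loc (c i) p st.2 st.1) q)) (fun q => lm nimm (muts (cmem (c i))) (loc (c i) q)) p); first by rewrite /= eqxx em.
    by move=> q /= /negbTE ->; rewrite em.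
Qed.
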